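(* Let $R\subseteq\mathbb N$ be sparse and let $A,B$ be operators on $R$ with $A\neq_R 0$. Then there is $\Delta_0\in\mathbb N$ such that for all $\Delta\ge\Delta_0$ and all $z\in R$, $|A(\sigma^\Delta z)|>B z$.
   Context: Let $R\subseteq\mathbb N$ be infinite, enumerated increasingly as $(r_n)_{n\in\mathbb N}$; $\sigma:R\to R$ is the successor map $\sigma(r_n)=r_{n+1}$ and $\sigma^k$ its $k$-fold iterate ($\sigma^0=\mathrm{id}$). An operator on $R$ is a function $R\to\mathbb Z$, $z\mapsto a_m\sigma^m(z)+\dots+a_0\sigma^0(z)$ with $a_i\in\mathbb Z$. For an operator $A$: $A=_R0$ if $Az=0$ for all $z\in R$; $A>_R0$ (resp. $A<_R0$) if $Az>0$ (resp. $Az<0$) for all but finitely many $z\in R$; $A\ne_R0$ means not $A=_R0$. $R$ is sparse if every operator $A$ satisfies (S1) $A=_R0$ or $A>_R0$ or $A<_R0$; and (S2) if $A>_R0$ then there is $\Delta\in\mathbb N$ with $A(\sigma^\Delta z)>z$ for all $z\in R$. *)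

(* Defs.v *)
From Stdlib Require Import ZArith List Lia.
Import ListNotations.
Open Scope Z_scope.

(* An infinite set R ⊆ ℕ is represented by its increasing enumeration
   r : nat -> nat (r n = r_n), required to be strictly increasing.
   The element z = r_n ∈ R is referred to by its index n, and
   σ^k(r_n) = r_(n+k). *)
Definition strictly_increasing (r : nat -> nat) : Prop :=
  forall m n : nat, (m < n)%nat -> (r m < r n)%nat.

(* An operator z ↦ a_m σ^m z + ... + a_0 σ^0 z is given by its list of
   coefficients [a_0; a_1; ...; a_m].  [op_at r a n] is its value at
   z = r_n, i.e. Σ_i a_i * r_(n+i). *)
Fixpoint op_at (r : nat -> nat) (a : list Z) (n : nat) : Z :=
  match a with
  | [] => 0
  | c :: a' => c * Z.of_nat (r n) + op_at r a' (S n)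
  end.

Definition op_eq0 (r : nat -> nat) (a : list Z) : Prop :=
  forall n : nat, op_at r a n = 0.

Definition op_pos (r : nat -> nat) (a : list Z) : Prop :=
  exists N : nat, forall n : nat, (N <= n)%nat -> op_at r a n > 0.

Definition op_neg (r : nat -> nat) (a : list Z) : Prop :=
  exists N : nat, forall n : nat, (N <= n)%nat -> op_at r a n < 0.

Definition sparse (r : nat -> nat) : Prop :=
  (forall a : list Z, op_eq0 r a \/ op_pos r a \/ op_neg r a) /\
  (forall a : list Z, op_pos r a ->
     exists D : nat, forall n : nat, op_at r a (n + D)%nat > Z.of_nat (r n)).

(* Main.v *)
Require Import Defs.
From Stdlib Require Import ZArith List Lia.
Import ListNotations.
Open Scope Z_scope.

Lemma mono (r : nat -> nat) : strictly_increasing r ->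
  forall i j, (i <= j)%nat -> (r i <= r j)%nat.
Proof.
  intros H i j Hij. destruct (Nat.eq_dec i j) as [->|Hn]; [lia|].
  apply Nat.lt_le_incl, H; lia.
Qed.

Fixpoint sumabs (b : list Z) : Z :=
  match b with [] => 0 | c :: b' => Z.abs c + sumabs b' end.

Lemma sumabs_nonneg b : 0 <= sumabs b.
Proof. induction b; simpl; lia. Qed.

Lemma op_bound (r : nat -> nat) : strictly_increasing r ->
  forall b n, op_at r b n <= sumabs b * Z.of_nat (r (n + length b)%nat).
Proof.
  intros Hr b. induction b as [|c b IH]; intros n; simpl; [lia|].
  specialize (IH (S n)).
  assert (H1 : (r n <= r (n + S (length b)))%nat) by (apply mono; auto; lia).
  replace (S n + length b)%nat with (n + S (length b))%nat in IH by lia.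
  assert (0 <= sumabs b) by apply sumabs_nonneg.
  set (x := Z.of_nat (r n)) in *. set (y := Z.of_nat (r (n + S (length b))%nat)) in *.
  assert (x <= y) by (unfold x, y; lia). assert (0 <= x) by (unfold x; lia).
  assert (c * x <= Z.abs c * y).
  { destruct (Z.abs_spec c) as [[? ->]|[? ->]]; nia. }
  nia.
Qed.

Lemma op_opp (r : nat -> nat) a n : op_at r (map Z.opp a) n = - op_at r a n.
Proof.
  revert n; induction a; intros n; simpl; [lia|]. rewrite IHa. lia.
Qed.

Lemma double (r : nat -> nat) : strictly_increasing r -> sparse r ->
  exists E, forall n, Z.of_nat (r (n + E)%nat) >= 2 * Z.of_nat (r n).
Proof.
  intros Hr [_ S2].
  destruct (S2 [-1; 1]) as [D HD].
  { exists 0%nat. intros n _. cbn [op_at]. specialize (Hr n (S n) ltac:(lia)). lia. }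
  exists (S D). intros n. specialize (HD n). cbn [op_at] in HD.
  assert (r n <= r (n + D))%nat by (apply mono; auto; lia).
  replace (n + S D)%nat with (S (n + D)) by lia. lia.
Qed.

Lemma growth (r : nat -> nat) : strictly_increasing r -> sparse r ->
  forall k : nat, exists F, forall n,
    Z.of_nat (r (n + F)%nat) >= Z.of_nat k * Z.of_nat (r n).
Proof.
  intros Hr Hs. destruct (double r Hr Hs) as [E HE].
  induction k as [|k [F HF]].
  - exists 0%nat. intros n. lia.
  - destruct k as [|k].
    + exists 0%nat. intros n. rewrite Nat.add_0_r. lia.
    + exists (F + E)%nat. intros n. specialize (HF n). specialize (HE (n + F)%nat).
      rewrite Nat.add_assoc. nia.
Qed.

Lemma pos_case (r : nat -> nat) (a B : list Z) :
  strictly_increasing r -> sparse r -> op_pos r a ->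
  exists D0 : nat, forall (D n : nat), (D0 <= D)%nat ->
    op_at r a (n + D)%nat > op_at r B n.
Proof.
  intros Hr Hs Hp. destruct Hs as [S1 S2] eqn:E.
  destruct (S2 a Hp) as [DA HA].
  destruct (growth r Hr Hs (Z.to_nat (sumabs B))) as [F HF].
  exists (length B + F + DA)%nat. intros D n HD.
  replace (n + D)%nat with ((n + (D - (length B + F + DA)) + length B + F) + DA)%nat by lia.
  specialize (HA (n + (D - (length B + F + DA)) + length B + F)%nat).
  specialize (HF (n + (D - (length B + F + DA)) + length B)%nat).
  pose proof (op_bound r Hr B n).
  assert (r (n + length B) <= r (n + (D - (length B + F + DA)) + length B))%nat
    by (apply mono; auto; lia).
  pose proof (sumabs_nonneg B).
  rewrite Z2Nat.id in HF by lia. nia.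
Qed.

Theorem mainTheorem3 (r : nat -> nat) (A B : list Z) :
  strictly_increasing r ->
  sparse r ->
  ~ op_eq0 r A ->
  exists D0 : nat, forall (D n : nat), (D0 <= D)%nat ->
    Z.abs (op_at r A (n + D)%nat) > op_at r B n.
Proof.
  intros Hr Hs Hne. pose proof Hs as [S1 _].
  destruct (S1 A) as [H|[H|H]]; [contradiction| |].
  - destruct (pos_case r A B Hr Hs H) as [D0 HD]. exists D0. intros D n HDn.
    specialize (HD D n HDn). lia.
  - assert (Hp : op_pos r (map Z.opp A)).
    { destruct H as [N HN]. exists N. intros n Hn. rewrite op_opp. specialize (HN n Hn). lia. }
    destruct (pos_case r _ B Hr Hs Hp) as [D0 HD]. exists D0. intros D n HDn.
    specialize (HD D n HDn). rewrite op_opp in HD. lia.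
Qed.
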